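(* Consider $\min_{\beta\in\mathbb{R}^p}\Phi(\beta)=f(\beta)+\sum_{j=1}^p g_j(\beta_j)$ with $f(\beta)=F(X\beta)$ for some $X\in\mathbb{R}^{n\times p}$. Suppose: (1) $f:\mathbb{R}^p\to\mathbb{R}$ is convex and differentiable and for each $j$ there is $L_j>0$ with $|\nabla_j f(x+he_j)-\nabla_j f(x)|\le L_j|h|$ for all $x\in\mathbb{R}^p,h\in\mathbb{R}$; each $g_j:\mathbb{R}\to\mathbb{R}$ is proper, closed and lower bounded; $\Phi$ admits at least one critical point; and for every $j$, $g_j/L_j$ is $\alpha$-semi-convex for some $\alpha<1$, i.e. $g_j/L_j+\frac{\alpha}{2}(\cdot)^2$ is convex. (2) The sequence $(\beta^{(k)})_{k\ge0}$ generated by cyclic proximal coordinate descent converges toward a critical point $\hat\beta$. (3) $\hat\beta$ is non-degenerate: for all $j\notin\mathcal{S}:=\mathrm{gsupp}(\hat\beta)$, $-\nabla_j f(\hat\beta)\in\mathrm{interior}(\partial g_j(\hat\beta_j))$. Then there exists $K>0$ such that for all $k\ge K$, $\beta^{(k)}_{\mathcal{S}^c}=\hat\beta_{\mathcal{S}^c}$.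
   Context: $\partial$ denotes the Fréchet subdifferential; with $g(\beta)=\sum_j g_j(\beta_j)$, a critical point of $\Phi$ is a point $x$ with $-\nabla f(x)\in\partial g(x)$. The generalized support is $\mathrm{gsupp}(\beta)=\{j\in[p]:\partial g_j(\beta_j)\text{ is a singleton}\}$, and $\mathcal{S}^c=[p]\setminus\mathcal{S}$. Cyclic proximal coordinate descent: starting from $\beta^{(0)}$, an epoch $k\to k+1$ updates successively for $j=1,\dots,p$ the $j$-th coordinate of the current point $\beta$ by $\beta_j\leftarrow\mathrm{prox}_{g_j/L_j}\big(\beta_j-\frac{1}{L_j}\nabla_j f(\beta)\big)$, where $\mathrm{prox}_{h}(z)=\arg\min_u \frac12(u-z)^2+h(u)$ (single-valued under the semi-convexity assumption); $\beta^{(k)}$ is the point after $k$ epochs. *)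

(* Defs.v *)
From HB Require Import structures.
From mathcomp Require Import all_boot all_order all_algebra.
From mathcomp Require Import all_classical all_reals all_analysis.
Set Implicit Arguments. Unset Strict Implicit. Unset Printing Implicit Defensive.
Import Order.TTheory GRing.Theory Num.Theory.
Import numFieldNormedType.Exports.
Local Open Scope classical_set_scope.
Local Open Scope ring_scope.

Section Defs.
Variable R : realType.

Definition basis_vec (p : nat) (j : 'I_p) : 'rV[R]_p := delta_mx 0 j.

Definition partial (p : nat) (f : 'rV[R]_p -> R) (j : 'I_p) (x : 'rV[R]_p) : R :=
  'D_(basis_vec j) f x.

Definition grad (p : nat) (f : 'rV[R]_p -> R) (x : 'rV[R]_p) : 'rV[R]_p :=
  \row_j partial f j x.

Definition convex_fun (V : lmodType R) (h : V -> R) : Prop :=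
  forall (x y : V) (t : R), 0 <= t <= 1 ->
    h (t *: x + (1 - t) *: y) <= t * h x + (1 - t) * h y.

(* Frechet subdifferential of a function on R^p (Euclidean pairing):
   v \in \partial h(x) iff liminf_{u -> x} (h u - h x - <v, u - x>) / |u - x| >= 0 *)
Definition frechet_subdiff (p : nat) (h : 'rV[R]_p -> R) (x : 'rV[R]_p) : set 'rV[R]_p :=
  [set v | forall eps : R, 0 < eps ->
     \forall u \near x,
       h u - h x - \sum_(i < p) v 0 i * (u 0 i - x 0 i) >= - eps * `|u - x|].

Definition frechet_subdiff1 (h : R -> R) (x : R) : set R :=
  [set v | forall eps : R, 0 < eps ->
     \forall u \near x, h u - h x - v * (u - x) >= - eps * `|u - x|].

Definition sep_sum (p : nat) (g : 'I_p -> R -> R) (b : 'rV[R]_p) : R :=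
  \sum_(j < p) g j (b 0 j).

Definition critical_point (p : nat) (f : 'rV[R]_p -> R) (g : 'I_p -> R -> R)
  (x : 'rV[R]_p) : Prop :=
  frechet_subdiff (sep_sum g) x (- grad f x).

Definition gsupp (p : nat) (g : 'I_p -> R -> R) (b : 'rV[R]_p) : set 'I_p :=
  [set j | exists v, frechet_subdiff1 (g j) (b 0 j) = [set v]].

Definition is_prox (h : R -> R) (z u : R) : Prop :=
  forall w, (u - z) ^+ 2 / 2 + h u <= (w - z) ^+ 2 / 2 + h w.

Definition set_coord (p : nat) (x : 'rV[R]_p) (j : 'I_p) (u : R) : 'rV[R]_p :=
  \row_i (if i == j then u else x 0 i).

Definition cd_epoch (p : nat) (f : 'rV[R]_p -> R) (g : 'I_p -> R -> R)
  (L : 'I_p -> R) (x y : 'rV[R]_p) : Prop :=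
  exists z : nat -> 'rV[R]_p,
    [/\ z 0%N = x, z p = y &
      forall j : 'I_p, exists u : R,
        is_prox (fun t => g j t / L j) (z j 0 j - partial f j (z j) / L j) u
        /\ z j.+1 = set_coord (z j) j u].

End Defs.

(* Main.v *)
Require Import Defs.
From HB Require Import structures.
From mathcomp Require Import all_boot all_order all_algebra.
From mathcomp Require Import all_classical all_reals all_analysis.
From mathcomp Require Import ring lra zify.
Import Order.TTheory GRing.Theory Num.Theory.
Import numFieldNormedType.Exports.
Local Open Scope classical_set_scope.
Local Open Scope ring_scope.

Section Helpers.
Variable R : realType.
Variable p : nat.
Implicit Types (f : 'rV[R]_p -> R).

Lemma conv_step f (hf : convex_fun f) x v l t : 0 <= l <= 1 ->
  f (x + (l * t) *: v) - f x <= l * (f (x + t *: v) - f x).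
Proof.
move=> hl; have := hf (x + t *: v) x l hl.
have -> : l *: (x + t *: v) + (1 - l) *: x = x + (l * t) *: v.
  by apply/rowP => i; rewrite !mxE; ring.
lra.
Qed.

Lemma Dq_le f (hf : convex_fun f) (hd : forall x, differentiable f x) x v t :
  0 < t -> 'D_v f x <= (f (x + t *: v) - f x) / t.
Proof.
move=> t0.
have D : derivable f x v := @diff_derivable _ _ _ f x v (hd x).
have C := cvg_dnbhs_at_right D.
apply: (cvgr_to_le C).
near=> h.
have h0 : 0 < h by near: h; exact: nbhs_right_gt.
have ht : h < t by near: h; exact: nbhs_right_lt.
rewrite /= addrC.
have hl : 0 <= h / t <= 1.
  by apply/andP; split; [rewrite divr_ge0 // ltW | rewrite ler_pdivrMr // mul1r ltW].
have := @conv_step f hf x v (h/t) t hl.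
rewrite mulfVK ?gt_eqF // => H.
rewrite -(ler_pM2l h0) mulrA mulfV ?gt_eqF // mul1r.
have E : forall a b c : R, a * (b / c) = a / c * b by move=> *; rewrite mulrCA mulrC.
rewrite E (addrC (h *: v)); lra.
Unshelve. all: by end_near.
Qed.

Lemma nbhs_left_gt' (x z : R) : z < x -> \forall y \near x^'-, z < y.
Proof.
move=> xz; exists (x - z) => //=; first by rewrite subr_gt0.
move=> y /= + yx; rewrite ger0_norm ?subr_ge0 1?ltW//.
by rewrite ltrBlDr => H; rewrite -(ltrD2r x) addrC; lra.
Qed.

Lemma Dq_ge f (hf : convex_fun f) (hd : forall x, differentiable f x) x v t :
  0 < t -> (f x - f (x - t *: v)) / t <= 'D_v f x.
Proof.
move=> t0.
have D : derivable f x v := @diff_derivable _ _ _ f x v (hd x).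
have C := cvg_dnbhs_at_left D.
apply: (cvgr_to_ge C).
near=> h.
have h0 : h < 0 by near: h; exact: nbhs_left_lt.
have ht : - t < h by near: h; apply: nbhs_left_gt'; lra.
rewrite /=.
have hl : 0 <= h / (- t) <= 1.
  apply/andP; split.
    by rewrite ler_ndivlMr ?oppr_lt0 // mul0r ltW.
  by rewrite ler_ndivrMr ?oppr_lt0 // mul1r ltW.
have := @conv_step f hf x v (h/(-t)) (-t) hl.
rewrite mulfVK ?lt_eqF ?oppr_lt0 // => H.
rewrite -(ler_nM2l h0) mulrA mulrV ?unitfE ?lt_eqF // mul1r.
rewrite scaleNr -scalerN in H.
have E : h * ((f x - f (x + t *: - v)) / t) = h / (- t) * (f (x + t *: - v) - f x).
  by field; rewrite lt0r_neq0.
rewrite -scalerN E (addrC (h *: v)); lra.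
Unshelve. all: by end_near.
Qed.

Lemma cont_shift f (hd : forall x, differentiable f x) (c x0 : 'rV[R]_p) :
  {for x0, continuous (fun x : 'rV[R]_p => f (x + c))}.
Proof.
apply: (@continuous_comp _ _ _ (fun x : 'rV[R]_p => x + c) f).
  apply: (@continuousD R _ ('rV[R]_p : normedModType R) (fun x => x) (fun=> c) x0). - by move=> A. - exact: cst_continuous.
exact: differentiable_continuous (hd _).
Qed.

Lemma D_upper f (hf : convex_fun f) (hd : forall x, differentiable f x) v x0 e :
  0 < e -> \forall x \near x0, 'D_v f x <= 'D_v f x0 + e.
Proof.
move=> e0.
have D : derivable f x0 v := @diff_derivable _ _ _ f x0 v (hd x0).
have C : (fun h => h^-1 *: ((f \o shift x0) (h *: v) - f x0)) @ 0^'+ --> 'D_v f x0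
  := cvg_dnbhs_at_right D.
have [t [t0 Ht]] : exists t : R, 0 < t /\ `|'D_v f x0 - t^-1 * (f (t *: v + x0) - f x0)| <= e / 2.
  apply: (@filter_ex _ (at_right (0:R))).
  near=> h; split; first by near: h; exact: nbhs_right_gt.
  by near: h; move/cvgrPdist_le: C; apply; lra.
have cf : {for x0, continuous (fun x : 'rV[R]_p => (f (x + t *: v) - f x) / t)}.
  apply: continuousM; last exact: cst_continuous.
  by apply: continuousB; [exact: cont_shift | exact: differentiable_continuous (hd _)].
move/cvgrPdist_le: cf => /(_ (e/2)) /=.
have e2 : 0 < e / 2 by lra.
move=> /(_ e2); apply: filter_app; near=> x => Hx.
have := @Dq_le f hf hd x v t t0.
rewrite (addrC (t *: v)) in Ht.
move: Ht Hx; rewrite !ler_norml.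
have E : forall a b : R, t^-1 * a = a / t by move=> a b; rewrite mulrC.
rewrite E //; lra.
Unshelve. all: by end_near.
Qed.

Lemma D_lower f (hf : convex_fun f) (hd : forall x, differentiable f x) v x0 e :
  0 < e -> \forall x \near x0, 'D_v f x0 - e <= 'D_v f x.
Proof.
move=> e0.
have D : derivable f x0 v := @diff_derivable _ _ _ f x0 v (hd x0).
have C : (fun h => h^-1 *: ((f \o shift x0) (h *: v) - f x0)) @ 0^'- --> 'D_v f x0
  := cvg_dnbhs_at_left D.
have [h [h0 Ht]] : exists h : R, h < 0 /\ `|'D_v f x0 - h^-1 * (f (h *: v + x0) - f x0)| <= e / 2.
  apply: (@filter_ex _ (at_left (0:R))).
  near=> h; split; first by near: h; exact: nbhs_left_lt.
  by near: h; move/cvgrPdist_le: C; apply; lra.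
set t := - h.
have t0 : 0 < t by rewrite /t; lra.
have ht : h = - t by rewrite /t opprK.
rewrite ht scaleNr (addrC (- _)) in Ht.
have cf : {for x0, continuous (fun x : 'rV[R]_p => (f x - f (x - t *: v)) / t)}.
  apply: continuousM; last exact: cst_continuous.
  by apply: continuousB; [exact: differentiable_continuous (hd _) | exact: cont_shift].
move/cvgrPdist_le: cf => /(_ (e/2)) /=.
have e2 : 0 < e / 2 by lra.
move=> /(_ e2); apply: filter_app; near=> x => Hx.
have := @Dq_ge f hf hd x v t t0.
move: Ht Hx; rewrite !ler_norml.
have E : (- t)^-1 * (f (x0 - t *: v) - f x0) = (f x0 - f (x0 - t *: v)) / t.
  by field; rewrite gt_eqF.
rewrite E; lra.
Unshelve. all: by end_near.
Qed.

Lemma entry_le_norm (M : 'rV[R]_p) m : `|M 0 m| <= `|M|.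
Proof.
rewrite [X in _ <= X]mx_normrE.
exact: (le_bigmax _ (fun ij : 'I_1 * 'I_p => `|M ij.1 ij.2|) (0, m)).
Qed.

Lemma row_cvg (a b z : nat -> 'rV[R]_p) (x : 'rV[R]_p) :
  a @ \oo --> x -> b @ \oo --> x ->
  (forall k m, z k 0 m = a k 0 m \/ z k 0 m = b k 0 m) -> z @ \oo --> x.
Proof.
move=> /cvgrPdist_le Ha /cvgrPdist_le Hb Hz.
apply/cvgrPdist_le => e e0.
near=> k.
have ha : `|x - a k| <= e by near: k; exact: Ha.
have hb : `|x - b k| <= e by near: k; exact: Hb.
rewrite [X in X <= _]mx_normrE; apply/bigmax_leP; split; first exact: ltW.
move=> [i m] _ /=; rewrite (ord1 i) !mxE.
case: (Hz k m) => ->.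
  by apply: le_trans ha; have := entry_le_norm (x - a k) m; rewrite !mxE.
by apply: le_trans hb; have := entry_le_norm (x - b k) m; rewrite !mxE.
Unshelve. all: by end_near.
Qed.

Lemma epoch_facts f (g : 'I_p -> R -> R) (L : 'I_p -> R) x y :
  cd_epoch f g L x y -> forall j : 'I_p, exists z : 'rV[R]_p,
  is_prox (fun t => g j t / L j) (x 0 j - partial f j z / L j) (y 0 j) /\
  forall m : 'I_p, z 0 m = if (m < j)%N then y 0 m else x 0 m.
Proof.
case=> Z [Z0 Zp HZ] j.
have Hs : forall i (Hi : (i < p)%N) m, (m != Ordinal Hi) -> Z i.+1 0 m = Z i 0 m.
  move=> i Hi m Hm; have [u [_ ->]] := HZ (Ordinal Hi).
  by rewrite /set_coord mxE (negbTE Hm).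
have fwd : forall i, (i <= p)%N -> forall m : 'I_p, (i <= m)%N -> Z i 0 m = x 0 m.
  elim=> [|i IH] Hi m Hm; first by rewrite Z0.
  rewrite (Hs i Hi) ?IH //; [exact: ltnW | exact: ltnW | ].
  by apply/eqP => E; move: Hm; rewrite E /= ltnn.
have bwd : forall d i, (i + d = p)%N -> forall m : 'I_p, (m < i)%N -> Z i 0 m = y 0 m.
  elim=> [|d IH] i Hid m Hm; first by rewrite addn0 in Hid; rewrite Hid Zp.
  have Hi : (i < p)%N by lia.
  rewrite -(Hs i Hi m); first by apply: IH; lia.
  by apply/eqP => E; move: Hm; rewrite E /= ltnn.
have [u [Hu HZj]] := HZ j.
have Zj : Z j 0 j = x 0 j by apply: fwd; [exact: ltnW (ltn_ord j) | exact: leqnn].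
have uy : u = y 0 j.
  have := bwd (p - j.+1)%N j.+1 _ j (ltnSn j).
  rewrite HZj /set_coord mxE eqxx; apply.
  have := ltn_ord j; lia.
exists (Z j); split; first by rewrite -uy -Zj.
move=> m; case: ifP => Hm.
  by apply: (bwd (p - j)%N); [have := ltn_ord j; lia | exact: Hm].
by apply: fwd; [exact: ltnW (ltn_ord j) | rewrite leqNgt Hm].
Qed.

Lemma final_alg (gu gb L b u be c P vs d : R) :
  0 < L -> 0 < d ->
  L * c = L * be - P ->
  (u - c) ^+ 2 / 2 + gu / L <= (b - c) ^+ 2 / 2 + gb / L ->
  gu - gb - (vs + d) * (u - b) >= - (d / 4) * `|u - b| ->
  gu - gb - (vs - d) * (u - b) >= - (d / 4) * `|u - b| ->
  `|P + vs| <= d / 4 ->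
  `|L * (u - b)| <= d / 4 ->
  `|L * (be - u)| <= d / 4 ->
  u = b.
Proof.
move=> L0 d0 Lc Hp H2 H3 HP Hu Hbe.
have Egu : gu = L * (gu / L) by field; rewrite gt_eqF.
have Egb : gb = L * (gb / L) by field; rewrite gt_eqF.
have H1 := Hp; rewrite -(ler_pM2l L0) in H1.
move: HP Hu Hbe; rewrite !ler_norml => HP Hu Hbe.
case: (ltgtP u b) => // hub.
- rewrite ltr0_norm ?subr_lt0 // in H2 H3.
  have prod : 0 < (b - u) * (L * c - L * b / 2 - L * u / 2 - vs + 3 * d / 4).
    by apply: mulr_gt0; lra.
  exfalso; lra.
- rewrite gtr0_norm ?subr_gt0 // in H2 H3.
  have prod : 0 < (u - b) * (vs + 3 * d / 4 - (L * c - L * b / 2 - L * u / 2)).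
    by apply: mulr_gt0; lra.
  exfalso; lra.
Qed.

Lemma nearS (P : nat -> Prop) :
  (\forall k \near \oo, P k) -> \forall k \near \oo, P k.+1.
Proof. by case=> N _ HN; exists N => // n /= Hn; apply: HN => /=; lia. Qed.

End Helpers.

Theorem proposition3 (R : realType) (n p : nat)
  (X : 'M[R]_(n, p)) (F : 'cV[R]_n -> R) (f : 'rV[R]_p -> R)
  (g : 'I_p -> R -> R) (L : 'I_p -> R)
  (beta : nat -> 'rV[R]_p) (hatb : 'rV[R]_p) :
  (* f(beta) = F(X beta) *)
  (forall b, f b = F (X *m b^T)) ->
  (* (1) f convex, differentiable, coordinatewise Lipschitz gradient *)
  convex_fun f ->
  (forall x, differentiable f x) ->
  (forall j, 0 < L j) ->
  (forall j x h, `|partial f j (x + h *: basis_vec R j) - partial f j x| <= L j * `|h|) ->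
  (* g_j proper (real valued), closed (lsc), lower bounded *)
  (forall j, lower_semicontinuous (fun t : R => ((g j t)%:E : \bar R))) ->
  (forall j, exists m : R, forall t, m <= g j t) ->
  (* Phi admits a critical point *)
  (exists x, critical_point f g x) ->
  (* g_j / L_j is alpha-semi-convex for some alpha < 1 *)
  (exists alpha : R, alpha < 1 /\
     forall j, convex_fun (fun t : R^o => g j t / L j + alpha / 2 * t ^+ 2)) ->
  (* (2) beta generated by cyclic proximal CD, converging to a critical point hatb *)
  (forall k, cd_epoch f g L (beta k) (beta k.+1)) ->
  beta @ \oo --> hatb ->
  critical_point f g hatb ->
  (* (3) non-degeneracy *)
  (forall j, ~ gsupp g hatb j ->
     interior (frechet_subdiff1 (g j) (hatb 0 j)) (- partial f j hatb)) ->
  exists K : nat, (0 < K)%N /\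
    forall k, (K <= k)%N -> forall j, ~ gsupp g hatb j -> beta k 0 j = hatb 0 j.
Proof.
move=> _ hconv hdiff hL _ _ _ _ _ hcd hcvg _ hnd.
have main : forall j : 'I_p,
    \forall k \near \oo, (~ gsupp g hatb j -> beta k.+1 0 j = hatb 0 j).
  move=> j.
  case: (pselect (gsupp g hatb j)) => hj.
    by apply: nearW => k /(_ hj).
  have L0 := hL j.
  set b := hatb 0 j.
  set vs := - partial f j hatb.
  have /nbhs_ballP [r /= r0 Hr] := hnd j hj.
  set d := r / 2.
  have d0 : 0 < d by rewrite /d; lra.
  have Hw1 : frechet_subdiff1 (g j) b (vs + d).
    apply: Hr; rewrite /ball /= opprD addrA subrr add0r normrN gtr0_norm //; rewrite /d; lra.
  have Hw2 : frechet_subdiff1 (g j) b (vs - d).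
    apply: Hr; rewrite /ball /= opprB addrC subrK gtr0_norm //; rewrite /d; lra.
  have d4 : 0 < d / 4 by lra.
  have F1 := Hw1 (d / 4) d4.
  have F2 := Hw2 (d / 4) d4.
  have [Zf HZf] := choice (fun k => @epoch_facts R p f g L _ _ (hcd k) j).
  have ZC : Zf @ \oo --> hatb.
    apply: (@row_cvg R p (fun k => beta k.+1) beta).
    - by rewrite -(cvg_shiftS beta) in hcvg.
    - exact: hcvg.
    - move=> k m; have [_ ->] := HZf k; case: ifP => _; [left|right]; by [].
  have bc : (fun k => beta k 0 j) @ \oo --> b.
    apply/cvgrPdist_le => e e0.
    move/cvgrPdist_le: hcvg => /(_ e e0) H; near=> k.
    have Hk : `|hatb - beta k| <= e by near: k; exact: H.
    apply: le_trans Hk; have := @entry_le_norm R p (hatb - beta k) j; rewrite !mxE.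
    by [].
  have G1 : \forall k \near \oo, - (d / 4) * `|beta k.+1 0 j - b| <=
      g j (beta k.+1 0 j) - g j b - (vs + d) * (beta k.+1 0 j - b).
    exact: (@nearS (fun k => - (d / 4) * `|beta k 0 j - b| <= g j (beta k 0 j) - g j b - (vs + d) * (beta k 0 j - b)) (bc _ F1)).
  have G2 : \forall k \near \oo, - (d / 4) * `|beta k.+1 0 j - b| <=
      g j (beta k.+1 0 j) - g j b - (vs - d) * (beta k.+1 0 j - b).
    exact: (@nearS (fun k => - (d / 4) * `|beta k 0 j - b| <= g j (beta k 0 j) - g j b - (vs - d) * (beta k 0 j - b)) (bc _ F2)).
  have e8 : 0 < d / (8 * L j) by apply: divr_gt0; lra.
  have sc : forall x : R, `|x| <= d / (8 * L j) -> `|L j * x| <= d / 8.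
    move=> x hx; rewrite normrM gtr0_norm //.
    apply: le_trans (ler_wpM2l (ltW L0) hx) _.
    by rewrite le_eqVlt; apply/orP; left; apply/eqP; field; rewrite gt_eqF.
  have B1 : \forall k \near \oo, `|b - beta k 0 j| <= d / (8 * L j).
    by move/cvgrPdist_le: bc => /(_ _ e8).
  have B2 := @nearS (fun k => `|b - beta k 0 j| <= d / (8 * L j)) B1.
  have DU := ZC _ (@D_upper R p f hconv hdiff (basis_vec R j) hatb _ d4).
  have DL := ZC _ (@D_lower R p f hconv hdiff (basis_vec R j) hatb _ d4).
  near=> k => _.
  have [Hpx _] := HZf k.
  have hb1 : `|b - beta k 0 j| <= d / (8 * L j) by near: k; exact: B1.
  have hb2 : `|b - beta k.+1 0 j| <= d / (8 * L j) by near: k; exact: B2.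
  have hu : 'D_(basis_vec R j) f (Zf k) <= 'D_(basis_vec R j) f hatb + d / 4.
    by near: k; exact: DU.
  have hl : 'D_(basis_vec R j) f hatb - d / 4 <= 'D_(basis_vec R j) f (Zf k).
    by near: k; exact: DL.
  have s1 := sc _ hb1.
  have s2 := sc _ hb2.
  move: s1 s2; rewrite !ler_norml => s1 s2.
  apply: (@final_alg R (g j (beta k.+1 0 j)) (g j b) (L j) b (beta k.+1 0 j)
    (beta k 0 j) (beta k 0 j - partial f j (Zf k) / L j) (partial f j (Zf k)) vs d).
  - exact: L0.
  - exact: d0.
  - by field; rewrite gt_eqF.
  - exact: (Hpx b).
  - by near: k; exact: G1.
  - by near: k; exact: G2.
  - by rewrite ler_norml /vs /partial; lra.
  - by rewrite ler_norml; lra.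
  - by rewrite ler_norml; lra.
have [N _ HN] := filter_forall _ main.
exists N.+1; split => // -[|k] Hk j hj //.
by apply: (HN k) => //=.
Unshelve. all: by end_near.
Qed.
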